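(* A finite triangle-free simple graph $G$ admits a two-acyclic factorization system if and only if its chromatic number satisfies $\chi(G)\le 3$.
   Context: Directed (multi)graphs are assumed to have a loop at every vertex. For a directed multigraph $(G,\to)$, form $G_A$ by relabelling arrows: an arrow $x\to y$ is of type $x\hookrightarrow y$ if for every $z$ with $z\to x$ there is an arrow $z\to y$; it is of type $x\twoheadrightarrow y$ if for every $z$ with $y\to z$ there is an arrow $x\to z$; if both hold it is counted as both types; otherwise it remains a plain arrow. $(G,\to)$ forms a two-acyclic factorization system if in $G_A$: (i) there are no $x\twoheadrightarrow y\twoheadrightarrow x$ and no $x\hookrightarrow y\hookrightarrow x$ with $x\ne y$; (ii) there is no $x\twoheadrightarrow y\hookrightarrow x$ with $x\neq y$; (iii) for every arrow $x\to z$ there exists $y$ with $x\twoheadrightarrow y\hookrightarrow z$. An undirected (multi)graph admits a two-acyclic factorization system if some orientation of its edges forms one. *)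

(* Defs.v *)
From mathcomp Require Import all_boot.
Set Implicit Arguments. Unset Strict Implicit. Unset Printing Implicit Defensive.

(* A finite simple graph: vertex type T : finType, adjacency e : rel T,
   symmetric and irreflexive. *)

Definition triangle_free (T : finType) (e : rel T) : Prop :=
  forall x y z : T, ~ [/\ e x y, e y z & e x z].

(* k-colourability (proper colourings ignore loops; irrelevant for simple graphs). *)
Definition colorableb (T : finType) (e : rel T) (k : nat) : bool :=
  [exists f : {ffun T -> 'I_k},
     [forall x, forall y, ((x != y) && e x y) ==> (f x != f y)]].

Lemma colorable_card (T : finType) (e : rel T) : exists k, colorableb e k.
Proof.
exists #|T|; apply/existsP; exists [ffun x => enum_rank x].
apply/forallP => x; apply/forallP => y; apply/implyP => /andP [nxy _].
rewrite !ffunE; apply: contra nxy => /eqP H.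
by apply/eqP; apply: enum_rank_inj.
Qed.

Definition chromatic_number (T : finType) (e : rel T) : nat :=
  ex_minn (colorable_card e).

(* Directed graphs with a loop at every vertex, as reflexive relations r.
   Arrow types in G_A: *)
Definition mono_arrow (T : finType) (r : rel T) (x y : T) : Prop :=
  r x y /\ forall z, r z x -> r z y.
Definition epi_arrow (T : finType) (r : rel T) (x y : T) : Prop :=
  r x y /\ forall z, r y z -> r x z.

Definition two_acyclic_fs (T : finType) (r : rel T) : Prop :=
  [/\ (forall x y, epi_arrow r x y -> epi_arrow r y x -> x = y),
      (forall x y, mono_arrow r x y -> mono_arrow r y x -> x = y),
      (forall x y, epi_arrow r x y -> mono_arrow r y x -> x = y) &
      (forall x z, r x z -> exists y, epi_arrow r x y /\ mono_arrow r y z)].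

Definition orientation (T : finType) (e o : rel T) : Prop :=
  [/\ (forall x y, o x y -> e x y),
      (forall x y, e x y -> o x y || o y x) &
      (forall x y, ~ (o x y && o y x))].

Definition with_loops (T : finType) (o : rel T) : rel T :=
  fun x y => (x == y) || o x y.

Definition admits_two_acyclic_fs (T : finType) (e : rel T) : Prop :=
  exists o : rel T, orientation e o /\ two_acyclic_fs (with_loops o).

(* Main.v *)
Require Import Defs.
From mathcomp Require Import all_boot.
From mathcomp Require Import zify.

Lemma colorable_mono (T : finType) (e : rel T) k m :
  k <= m -> colorableb e k -> colorableb e m.
Proof.
move=> km /existsP [f /forallP Hf]; apply/existsP.
exists [ffun x => widen_ord km (f x)].
apply/forallP => x; apply/forallP => y; apply/implyP => H.
have := forallP (Hf x) y; rewrite H /= !ffunE => /eqP nf.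
apply/eqP => [[]] E; apply: nf; exact: val_inj.
Qed.

Lemma chrom3 (T : finType) (e : rel T) :
  chromatic_number e <= 3 <-> colorableb e 3.
Proof.
rewrite /chromatic_number; case: ex_minnP => m Hm Hmin; split.
  by move=> H; exact: colorable_mono H Hm.
by move=> H; exact: Hmin.
Qed.

Theorem proposition3p41 (T : finType) (e : rel T)
  (e_sym : symmetric e) (e_irr : irreflexive e) (tf : triangle_free e) :
  admits_two_acyclic_fs e <-> chromatic_number e <= 3.
Proof.
rewrite chrom3; split.
- move=> [o [[oe eo oas] [_ _ _ H3]]].
  have key : forall x y, o x y ->
      [forall w, ~~ o w x] \/ [forall w, ~~ o y w].
    move=> x y oxy.
    have rxy : with_loops o x y by rewrite /with_loops oxy orbT.
    have [w [[rxw epw] [rwy mow]]] := H3 x y rxy.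
    move: rxw rwy; rewrite /with_loops => /orP [/eqP Ex | oxw].
      subst w => _; left; apply/forallP => z; apply/negP => ozx.
      have : with_loops o z y by apply: mow; rewrite /with_loops ozx orbT.
      rewrite /with_loops => /orP [/eqP Ez | ozy].
        by subst z; apply: (oas x y); rewrite oxy ozx.
      by apply: (tf z x y); split; apply: oe.
    move=> /orP [/eqP Ew | owy].
      subst w; right; apply/forallP => z; apply/negP => oyz.
      have : with_loops o x z by apply: epw; rewrite /with_loops oyz orbT.
      rewrite /with_loops => /orP [/eqP Ez | oxz].
        by subst z; apply: (oas x y); rewrite oxy oyz.
      by apply: (tf x y z); split; apply: oe.
    by exfalso; apply: (tf x w y); split; apply: oe.
  pose c (x : T) : 'I_3 := if [forall w, ~~ o w x] then inord 0
     else if [forall w, ~~ o x w] then inord 1 else inord 2.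
  have main : forall x y, o x y -> c x != c y.
    move=> x y oxy.
    have ny : ~~ [forall w, ~~ o w y].
      by apply/negP => /forallP /(_ x); rewrite oxy.
    have nx : ~~ [forall w, ~~ o x w].
      by apply/negP => /forallP /(_ y); rewrite oxy.
    rewrite /c (negbTE ny) (negbTE nx).
    case: (key x y oxy) => [sx | sy].
      rewrite sx; case: ifP => _; apply/eqP => /(congr1 val);
        rewrite /= !inordK //.
    rewrite sy; case: ifP => _; apply/eqP => /(congr1 val);
        rewrite /= !inordK //.
  apply/existsP; exists [ffun x => c x].
  apply/forallP => x; apply/forallP => y; apply/implyP => /andP [nxy exy].
  rewrite !ffunE; case/orP: (eo x y exy) => H; first exact: main.
  by rewrite eq_sym; apply: main.
- move=> /existsP [f /forallP Hf].
  have prop : forall x y, e x y -> f x != f y.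
    move=> x y exy; have := forallP (Hf x) y; rewrite exy andbT.
    case: (eqVneq x y) => [Exy | nxy]; last by move=> /implyP; apply.
    by subst y; rewrite e_irr in exy.
  exists (fun x y => e x y && (f x < f y)); split.
    split.
    + by move=> x y /andP [].
    + move=> x y exy; rewrite exy e_sym exy /=.
      have := prop x y exy; rewrite neq_ltn; done.
    + move=> x y /andP [/andP [_ a] /andP [_ b]].
      by have := ltn_trans a b; rewrite ltnn.
  split.
  + move=> x y [rxy _] [ryx _]; move: rxy ryx; rewrite /with_loops.
    case/orP => [/eqP // | /andP [_ a]]; case/orP => [/eqP -> // | /andP [_ b]].
    by have := ltn_trans a b; rewrite ltnn.
  + move=> x y [rxy _] [ryx _]; move: rxy ryx; rewrite /with_loops.
    case/orP => [/eqP // | /andP [_ a]]; case/orP => [/eqP -> // | /andP [_ b]].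
    by have := ltn_trans a b; rewrite ltnn.
  + move=> x y [rxy _] [ryx _]; move: rxy ryx; rewrite /with_loops.
    case/orP => [/eqP // | /andP [_ a]]; case/orP => [/eqP -> // | /andP [_ b]].
    by have := ltn_trans a b; rewrite ltnn.
  + move=> x z rxz.
    have triv : forall u, epi_arrow (with_loops (fun x y => e x y && (f x < f y))) u u
        /\ mono_arrow (with_loops (fun x y => e x y && (f x < f y))) u u.
      by move=> u; split; split; rewrite /with_loops ?eqxx.
    move: (rxz); rewrite /with_loops => /orP [/eqP Exz | /andP [exz lt]].
      by subst z; exists x; apply: triv.
    case: (eqVneq (val (f x)) 0) => [f0 | fn0].
      exists x; split; first exact: (proj1 (triv x)).
      split => // w; rewrite /with_loops => /orP [/eqP -> // | /andP [_ b]].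
      by rewrite f0 in b.
    exists z; split; last exact: (proj2 (triv z)).
    split => // w; rewrite /with_loops => /orP [/eqP <- // | /andP [_ b]].
    exfalso; move: fn0 => /eqP fn0; have := ltn_ord (f w); have := ltn_ord (f x).
    move: lt b fn0; rewrite /=; set a := nat_of_ord (f x); set bb := nat_of_ord (f z); set cc := nat_of_ord (f w); lia.
Qed.
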